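(* Suppose $N$ carries a graded complementation and $X$ is a Macaulay basis of $M$. Then, as $\mathbf{k}$-vector spaces, \[N=M\oplus\Big\{n\in N:\ n_b\in N_b\ominus W_b(X)\text{ for all }b\in B\Big\}.\]
   Context: Standing setup. $\mathbf{k}$ is a field. $(A,+,0)$ is a finitely generated, cancellative commutative monoid with a total order $\le$ which is a well-order, such that $0<a$ for every $a\neq0$ and $a\le a'$ implies $a+c\le a'+c$. $R=\bigoplus_{a\in A}R_a$ is a commutative Noetherian $\mathbf{k}$-algebra graded by $A$. $B$ is a well-ordered totally ordered set with an action $(a,b)\mapsto a\cdot b$ of $A$ with $0\cdot b=b$, $(a+a')\cdot b=a\cdot(a'\cdot b)$, monotone and cancellative in each argument. $N=\bigoplus_{b\in B}N_b$ is a Noetherian $R$-module graded by $B$ ($R_aN_b\subseteq N_{a\cdot b}$), $M\subseteq N$ an $R$-submodule; $n_b$ denotes the degree-$b$ component of $n\in N$. For $m\ne0$, $\deg m=\max\{b:m_b\ne0\}$, $\operatorname{lf}(m)=m_{\deg m}$. A finite set $X=\{m_1,\dots,m_n\}$ of nonzero elements of $M$ is a Macaulay basis of $M$ if the $R$-submodule generated by $\{\operatorname{lf}(p):0\ne p\in M\}$ equals that generated by $\operatorname{lf}(m_1),\dots,\operatorname{lf}(m_n)$. $W_b(X)=\operatorname{span}_{\mathbf{k}}\{r\operatorname{lf}(x): x\in X,\ r\in R\text{ homogeneous},\ r\operatorname{lf}(x)\in N_b\}$. A graded complementation on $N$ assigns to each $b$ and each subspace $W\le N_b$ a subspace $W^c\le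 N_b$ with $W\oplus W^c=N_b$; $U\ominus W:=U\cap W^c$. *)

(* Defs.v *)
From HB Require Import structures.
From mathcomp Require Import all_boot all_order all_algebra.
Set Implicit Arguments. Unset Strict Implicit. Unset Printing Implicit Defensive.
Import GRing.Theory.
Local Open Scope ring_scope.

Definition total_order (T : eqType) (le : rel T) : Prop :=
  [/\ reflexive le, antisymmetric le, transitive le & total le].

Definition well_order (T : eqType) (le : rel T) : Prop :=
  total_order le /\ well_founded (fun x y => le x y && (x != y)).

Definition fg_monoid (A : nmodType) : Prop :=
  exists gens : seq A, forall a : A, exists l : seq A,
    (forall x, x \in l -> x \in gens) /\ a = \sum_(x <- l) x.

Definition cancellative_monoid (A : nmodType) : Prop :=
  forall a a' c : A, a + c = a' + c -> a = a'.

Definition ordered_monoid (A : nmodType) (leA : rel A) : Prop :=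
  [/\ well_order leA,
      (forall a : A, a != 0 -> leA 0 a && (0 != a)) &
      (forall a a' c : A, leA a a' -> leA (a + c) (a' + c))].

Definition ordered_action (A : nmodType) (leA : rel A) (B : eqType) (leB : rel B)
    (act : A -> B -> B) : Prop :=
  [/\ well_order leB,
      (forall b, act 0 b = b),
      (forall a a' b, act (a + a') b = act a (act a' b)),
      ((forall a a' b, leA a a' -> leB (act a b) (act a' b)) /\
       (forall a b b', leB b b' -> leB (act a b) (act a b'))) &
      ((forall a a' b, act a b = act a' b -> a = a') /\
       (forall a b b', act a b = act a b' -> b = b'))].

Definition ideal_of (R : comPzRingType) (I : R -> Prop) : Prop :=
  [/\ I 0, (forall x y, I x -> I y -> I (x + y)) & (forall r x, I x -> I (r * x))].

Definition noetherian_ring (R : comPzRingType) : Prop :=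
  forall I : R -> Prop, ideal_of I -> exists s : seq R, forall x,
    I x <-> exists c : nat -> R, x = \sum_(i < size s) c i * s`_i.

Definition submodule (R : pzRingType) (N : lmodType R) (M : N -> Prop) : Prop :=
  [/\ M 0, (forall x y, M x -> M y -> M (x + y)) & (forall (r : R) x, M x -> M (r *: x))].

Definition Rspan (R : pzRingType) (N : lmodType R) (S : N -> Prop) (n : N) : Prop :=
  exists s : seq N, (forall i, (i < size s)%N -> S s`_i) /\
    exists c : nat -> R, n = \sum_(i < size s) c i *: s`_i.

Definition noetherian_module (R : pzRingType) (N : lmodType R) : Prop :=
  forall M : N -> Prop, submodule M -> exists s : seq N, forall x,
    M x <-> Rspan (fun v => exists i, (i < size s)%N /\ v = s`_i) x.

Section KStuff.
Variables (k : fieldType) (R : comAlgType k).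

(* k-subspace of an R-module N (k acts through k -> R, c |-> c%:A) *)
Definition ksubspace (N : lmodType R) (W : N -> Prop) : Prop :=
  [/\ W 0, (forall x y, W x -> W y -> W (x + y)) &
      (forall (c : k) x, W x -> W (c%:A *: x))].

Definition kspan (N : lmodType R) (S : N -> Prop) (n : N) : Prop :=
  exists s : seq N, (forall i, (i < size s)%N -> S s`_i) /\
    exists c : nat -> k, n = \sum_(i < size s) (c i)%:A *: s`_i.

(* R = (+)_{a in A} R_a, compR a = projection onto R_a; R_a R_a' <= R_{a+a'} *)
Definition graded_algebra (A : nmodType) (compR : A -> R -> R) : Prop :=
  [/\ (forall a x y, compR a (x + y) = compR a x + compR a y),
      (forall a (c : k) x, compR a (c *: x) = c *: compR a x),
      (forall a a' x, compR a (compR a' x) = if a == a' then compR a x else 0),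
      (forall x, exists s : seq A, [/\ uniq s, (forall a, a \notin s -> compR a x = 0)
                                     & x = \sum_(a <- s) compR a x]) &
      (forall a a' x y, compR a x = x -> compR a' y = y -> compR (a + a') (x * y) = x * y)].

(* N = (+)_{b in B} N_b (k-linear projections compN b), R_a N_b <= N_{a.b} *)
Definition graded_module (A : nmodType) (compR : A -> R -> R) (B : eqType)
    (act : A -> B -> B) (N : lmodType R) (compN : B -> N -> N) : Prop :=
  [/\ (forall b x y, compN b (x + y) = compN b x + compN b y),
      (forall b (c : k) x, compN b (c%:A *: x) = c%:A *: compN b x),
      (forall b b' x, compN b (compN b' x) = if b == b' then compN b x else 0),
      (forall x, exists s : seq B, [/\ uniq s, (forall b, b \notin s -> compN b x = 0)
                                     & x = \sum_(b <- s) compN b x]) &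
      (forall a b (r : R) x, compR a r = r -> compN b x = x ->
         compN (act a b) (r *: x) = r *: x)].

Definition is_deg (B : eqType) (leB : rel B) (N : lmodType R) (compN : B -> N -> N)
    (m : N) (b : B) : Prop :=
  compN b m != 0 /\ forall b', compN b' m != 0 -> leB b' b.

Definition is_lf (B : eqType) (leB : rel B) (N : lmodType R) (compN : B -> N -> N)
    (m v : N) : Prop :=
  m != 0 /\ exists b, is_deg leB compN m b /\ v = compN b m.

Definition macaulay_basis (B : eqType) (leB : rel B) (N : lmodType R)
    (compN : B -> N -> N) (M : N -> Prop) (X : seq N) : Prop :=
  (forall i, (i < size X)%N -> X`_i != 0 /\ M X`_i) /\
  forall n : N,
    Rspan (fun v => exists p, M p /\ is_lf leB compN p v) n <->
    Rspan (fun v => exists i, (i < size X)%N /\ is_lf leB compN X`_i v) n.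

Definition W_b (A : nmodType) (compR : A -> R -> R) (B : eqType) (leB : rel B)
    (N : lmodType R) (compN : B -> N -> N) (X : seq N) (b : B) : N -> Prop :=
  kspan (fun v => exists (r : R) (x : N),
           [/\ (exists a, compR a r = r),
               (exists i, (i < size X)%N /\ is_lf leB compN X`_i x),
               v = r *: x & compN b v = v]).

(* graded complementation: for each b and each k-subspace W <= N_b,
   a k-subspace W^c <= N_b with W (+) W^c = N_b *)
Definition graded_complementation (B : eqType) (N : lmodType R) (compN : B -> N -> N)
    (cmpl : B -> (N -> Prop) -> (N -> Prop)) : Prop :=
  forall b (W : N -> Prop), ksubspace W -> (forall w, W w -> compN b w = w) ->
    [/\ ksubspace (cmpl b W),
        (forall w, cmpl b W w -> compN b w = w),
        (forall w, W w -> cmpl b W w -> w = 0) &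
        (forall n, compN b n = n -> exists u v, [/\ W u, cmpl b W v & n = u + v])].

Definition ominus (B : eqType) (N : lmodType R) (cmpl : B -> (N -> Prop) -> (N -> Prop))
    (b : B) (U W : N -> Prop) : N -> Prop :=
  fun n => U n /\ cmpl b W n.

Definition complement_part (A : nmodType) (compR : A -> R -> R) (B : eqType) (leB : rel B)
    (N : lmodType R) (compN : B -> N -> N) (X : seq N)
    (cmpl : B -> (N -> Prop) -> (N -> Prop)) (n : N) : Prop :=
  forall b, ominus cmpl b (fun y => compN b y = y) (W_b compR leB compN X b) (compN b n).

End KStuff.

(* Main.v *)
Require Import Defs.
From HB Require Import structures.
From mathcomp Require Import all_boot all_order all_algebra.
From mathcomp Require Import zify.
Import GRing.Theory.
Local Open Scope ring_scope.

Section KSpan.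
Variables (k : fieldType) (R : comAlgType k) (N : lmodType R).

Lemma kspan_ksub (S : N -> Prop) : ksubspace (kspan S).
Proof.
split.
- exists [::]; split; first by []. exists (fun _ => 0); by rewrite big_ord0.
- move=> x y [s1 [h1 [c1 ->]]] [s2 [h2 [c2 ->]]].
  exists (s1 ++ s2); split.
    move=> i; rewrite size_cat nth_cat; case: ifP => hi hi2; first exact: h1.
    apply: h2; move/negbT: hi; rewrite -leqNgt => hi; rewrite ltn_subLR //.
  exists (fun i => if (i < size s1)%N then c1 i else c2 (i - size s1)%N).
  rewrite size_cat big_split_ord /=; congr (_ + _); apply: eq_bigr => i _.
    by rewrite /= nth_cat ltn_ord.
  by rewrite /= nth_cat ltnNge leq_addr /= addKn.
- move=> c x [s [h [c1 ->]]]; exists s; split => //; exists (fun i => c * c1 i).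
  rewrite scaler_sumr; apply: eq_bigr => i _; rewrite scalerA.
  by rewrite mulr_algl scalerA.
Qed.

Lemma kspan_gen (S : N -> Prop) g : S g -> kspan S g.
Proof.
move=> hg; exists [:: g]; split; first by case.
by exists (fun _ => 1); rewrite big_ord1 /= !scale1r.
Qed.

Lemma kspan_ind (S P : N -> Prop) : ksubspace P -> (forall g, S g -> P g) ->
  forall u, kspan S u -> P u.
Proof.
move=> [P0 PD PZ] PS u [s [hs [c ->]]].
apply: big_ind => // i _; apply: PZ; apply: PS; exact: hs.
Qed.
End KSpan.

Section Graded.
Variables (k : fieldType) (A : nmodType) (leA : rel A)
  (R : comAlgType k) (compR : A -> R -> R)
  (B : eqType) (leB : rel B) (act : A -> B -> B)
  (N : lmodType R) (compN : B -> N -> N).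
Hypothesis HA : graded_algebra compR.
Hypothesis HM : graded_module compR act compN.
Hypothesis Hact : ordered_action leA leB act.

Lemma cN_add b x y : compN b (x + y) = compN b x + compN b y.
Proof. by case: HM => H _ _ _ _; apply: H. Qed.
Lemma cN_idem b x : compN b (compN b x) = compN b x.
Proof. by case: HM => _ _ H _ _; rewrite H eqxx. Qed.
Lemma cN_ortho b b' x : b != b' -> compN b (compN b' x) = 0.
Proof. by case: HM => _ _ H _ _; rewrite H => /negbTE ->. Qed.
Lemma cN_scale b (c : k) x : compN b (c%:A *: x) = c%:A *: compN b x.
Proof. by case: HM => _ H _ _ _; apply: H. Qed.
Lemma cN0 b : compN b 0 = 0.
Proof. have h := cN_add b 0 0; rewrite addr0 in h. by apply: (addrI (compN b 0)); rewrite addr0 -h. Qed.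
Lemma cNN b x : compN b (- x) = - compN b x.
Proof. apply: (addrI (compN b x)); by rewrite -cN_add !subrr cN0. Qed.
Lemma cNB b x y : compN b (x - y) = compN b x - compN b y.
Proof. by rewrite cN_add cNN. Qed.
Lemma cN_sum b (I : Type) (s : seq I) (P : pred I) (F : I -> N) :
  compN b (\sum_(i <- s | P i) F i) = \sum_(i <- s | P i) compN b (F i).
Proof. exact: (big_morph _ (cN_add b) (cN0 b)). Qed.

Lemma cN_hom_scale a d r y b : compR a r = r -> compN d y = y ->
  compN b (r *: y) = if b == act a d then r *: y else 0.
Proof.
move=> hr hy; case: HM => _ _ H _ Hh.
have h := Hh a d r y hr hy.
rewrite -{1}h H; case: eqP => [->|//]; exact: h.
Qed.

Lemma scale_support a r z b : compR a r = r -> compN b (r *: z) != 0 ->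
  exists2 b'', compN b'' z != 0 & b = act a b''.
Proof.
move=> hr; case: HM => _ _ _ Hdec _.
have [s [_ _ hz]] := Hdec z.
rewrite {1}hz scaler_sumr cN_sum => h.
have /hasP [b'' _ hb''] : has (fun b'' => compN b (r *: compN b'' z) != 0) s.
  apply/negPn/negP => /hasPn H; move: h; rewrite big1_seq ?eqxx //.
  by move=> i /andP[_ /H] /negPn /eqP.
move: hb''; rewrite (cN_hom_scale a b'' r (compN b'' z) b hr (cN_idem b'' z)).
have [-> h'|_] := eqVneq b (act a b''); last by rewrite eqxx.
exists b'' => //; apply: contraNneq h' => ->; by rewrite scaler0.
Qed.

Definition bnd (n : N) b := forall b', compN b' n != 0 -> leB b' b.

Lemma max_seq (s : seq B) : s != [::] ->
  exists2 m, m \in s & forall y, y \in s -> leB y m.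
Proof.
case: Hact => [[[refl anti trans tot] _] _ _ _ _].
elim: s => [//|x s IH] _.
case: (altP (s =P [::])) => [->|hs].
  by exists x; rewrite ?inE // => y; rewrite inE => /eqP ->.
have [m hm hmax] := IH hs.
case/orP: (tot x m) => hxm.
  exists m; first by rewrite inE hm orbT.
  by move=> y; rewrite inE => /orP[/eqP ->|/hmax].
exists x; first by rewrite inE eqxx.
move=> y; rewrite inE => /orP[/eqP ->|/hmax hy]; first exact: refl.
exact: trans hy hxm.
Qed.

Lemma zero_or_bnd n : n = 0 \/ exists b, compN b n != 0 /\ bnd n b.
Proof.
case: HM => _ _ _ Hdec _.
have [s [_ hout hn]] := Hdec n.
set t := [seq b <- s | compN b n != 0].
case: (altP (t =P [::])) => [ht|ht].
  left; rewrite hn big1_seq // => b /andP[_ hb].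
  apply/eqP; apply: contraT => hnz.
  have : b \in t by rewrite mem_filter hnz.
  by rewrite ht.
right; have [m hm hmax] := max_seq t ht.
exists m; split; first by move: hm; rewrite mem_filter => /andP[].
move=> b' hb'; apply: hmax; rewrite mem_filter hb' /=.
by apply: contraT => /hout /eqP; rewrite (negbTE hb').
Qed.


Variables (X : seq N) (M : N -> Prop) (cmpl : B -> (N -> Prop) -> (N -> Prop)).
Hypothesis HMs : submodule M.
Hypothesis Hc : graded_complementation compN cmpl.
Hypothesis Hmac : macaulay_basis leB compN M X.

Notation Wb := (W_b compR leB compN X).
Notation cp := (complement_part compR leB compN X cmpl).

Lemma Wb_ksub b : ksubspace (Wb b).
Proof. exact: kspan_ksub. Qed.

Lemma Wb_in b w : Wb b w -> compN b w = w.
Proof.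
move=> hw; apply: (@kspan_ind _ _ _ _ (fun w => compN b w = w) _ _ w hw).
  split; [exact: cN0 | move=> x y hx hy; by rewrite cN_add hx hy
         | move=> c x hx; by rewrite cN_scale hx].
by move=> g [r [x [_ _ _]]].
Qed.

Lemma cm_facts b : [/\ ksubspace (cmpl b (Wb b)),
   (forall w, cmpl b (Wb b) w -> compN b w = w),
   (forall w, Wb b w -> cmpl b (Wb b) w -> w = 0) &
   (forall n, compN b n = n -> exists u v, [/\ Wb b u, cmpl b (Wb b) v & n = u + v])].
Proof. apply: Hc; [exact: Wb_ksub | exact: Wb_in]. Qed.

Lemma cpD x y : cp x -> cp y -> cp (x + y).
Proof.
move=> hx hy b; split; first exact: cN_idem.
have [[_ hD _] _ _ _] := cm_facts b.
rewrite cN_add; apply: hD; [exact: (proj2 (hx b)) | exact: (proj2 (hy b))].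
Qed.

Lemma cp_single b v : cmpl b (Wb b) v -> cp v.
Proof.
move=> hv b'; split; first exact: cN_idem.
have [_ hin _ _] := cm_facts b.
have [-> | hne] := eqVneq b' b; first by rewrite (hin _ hv).
rewrite -(hin _ hv) (cN_ortho b' b v hne).
by case: (cm_facts b') => [[]].
Qed.

Lemma lift b u : Wb b u -> exists m, [/\ M m, compN b m = u &
  forall b', b' != b -> compN b' m != 0 -> leB b' b].
Proof.
case: HMs => M0 MD MZ.
move=> hu; apply: (@kspan_ind _ _ _ _ (fun u => exists m, [/\ M m, compN b m = u &
  forall b', b' != b -> compN b' m != 0 -> leB b' b]) _ _ u hu).
- split.
  + exists 0; split => //; first exact: cN0. by move=> b' _; rewrite cN0 eqxx.
  + move=> x y [m1 [h1 e1 b1]] [m2 [h2 e2 b2]]; exists (m1 + m2); split.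
    * exact: MD.
    * by rewrite cN_add e1 e2.
    move=> b' hb'; rewrite cN_add; have [z1|nz1] := eqVneq (compN b' m1) 0.
      rewrite z1 add0r; exact: b2.
    by move=> _; apply: b1.
  + move=> c x [m [h e bd]]; exists (c%:A *: m); split.
    * exact: MZ.
    * by rewrite cN_scale e.
    move=> b' hb'; rewrite cN_scale; have [z|nz] := eqVneq (compN b' m) 0.
      by rewrite z scaler0 eqxx.
    by move=> _; apply: bd.
- move=> g [r [x [[a ha] [i [hi [hXnz [d [[hdnz hdmax] hx]]]]] hg hv]]].
  subst x g.
  have [hXi MXi] := proj1 Hmac i hi.
  have [g0|gnz] := eqVneq (r *: compN d X`_i) 0.
    exists 0; split => //; first by rewrite cN0 g0. by move=> b' _; rewrite cN0 eqxx.
  have hb : b = act a d.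
    move: hv; rewrite (cN_hom_scale a d r (compN d X`_i) b ha (cN_idem d _)).
    have [//|_ h] := eqVneq b (act a d).
    by move: gnz; rewrite -h eqxx.
  exists (r *: X`_i); split; first exact: MZ.
    rewrite -{1}(subrK (compN d X`_i) X`_i) scalerDr cN_add.
    rewrite [X in _ + X](cN_hom_scale a d r (compN d X`_i) b ha (cN_idem d _)) -hb eqxx.
    suff -> : compN b (r *: (X`_i - compN d X`_i)) = 0 by rewrite add0r.
    apply/eqP; apply: contraT => hnz.
    have [b'' hb'' hbe] := scale_support a r _ b ha hnz.
    move: hb''; case: Hact => _ _ _ _ [_ canc].
    have e : b'' = d by apply: (canc a); rewrite -hbe -hb.
    by rewrite e cNB cN_idem subrr eqxx.
  move=> b' _ hnz; have [b'' hb'' ->] := scale_support a r _ b' ha hnz.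
  rewrite hb; case: Hact => _ _ _ [_ mono] _; apply: mono; exact: hdmax.
Qed.

Lemma exist_bnd b n : bnd n b -> exists m c, [/\ M m, cp c & n = m + c].
Proof.
case: Hact => [[_ wf] _ _ _ _].
case: HMs => M0 MD MZ.
elim/(well_founded_ind wf): b n => b IH n hn.
have [_ hin _ hdec] := cm_facts b.
have [u [v [hu hv huv]]] := hdec (compN b n) (cN_idem b n).
have [m1 [hm1 e1 bd1]] := lift b u hu.
set n' := n - m1 - v.
have hvb := hin _ hv.
have hstr : forall b', compN b' n' != 0 -> leB b' b && (b' != b).
  move=> b'; rewrite /n' !cNB.
  have [->|hne] := eqVneq b' b.
    by rewrite huv e1 hvb (addrC u v) addrK subrr eqxx.
  rewrite -hvb (cN_ortho b' b v hne) subr0 /= andbT.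
  have [z|nz] := eqVneq (compN b' n) 0.
    rewrite z sub0r oppr_eq0 => h; exact: bd1 b' hne h.
  by move=> _; apply: hn.
have hsum : n = m1 + v + n' by rewrite /n' (addrC (m1 + v)) -[n - m1 - v]addrA -opprD subrK.
case: (zero_or_bnd n') => [z | [b0 [hb0 hbnd]]].
  exists m1, v; split => //; [exact: (cp_single b v hv) | by rewrite hsum z addr0].
have [m2 [c2 [hm2 hc2 e2]]] := IH b0 (hstr b0 hb0) n' hbnd.
exists (m1 + m2), (v + c2); split; first exact: MD.
  exact: (cpD _ _ (cp_single b v hv) hc2).
by rewrite hsum e2 addrACA.
Qed.

Lemma lf_term b j w (c : R) : (j < size X)%N -> is_lf leB compN X`_j w ->
  Wb b (compN b (c *: w)).
Proof.
move=> hj hlf; case: (hlf) => _ [d [_ hw]]; subst w.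
case: HA => _ _ Hidem Hdec _.
have [sa [_ _ hc]] := Hdec c.
have [h0 hD _] := Wb_ksub b.
rewrite {1}hc scaler_suml cN_sum.
apply: big_ind => // a _.
have hr : compR a (compR a c) = compR a c by rewrite Hidem eqxx.
rewrite (cN_hom_scale a d (compR a c) (compN d X`_j) b hr (cN_idem d _)).
have [e|_] := eqVneq b (act a d); last exact: h0.
apply: kspan_gen; exists (compR a c), (compN d X`_j); split => //.
  by exists a.
  by exists j.
by rewrite (cN_hom_scale a d (compR a c) (compN d X`_j) b hr (cN_idem d _)) e eqxx.
Qed.

Lemma uniq_part n : M n -> cp n -> n = 0.
Proof.
case: Hmac => _ HX hM hcp.
case: (zero_or_bnd n) => [//| [b [hb hbnd]]].
have hnz : n != 0 by apply: contraNneq hb => ->; rewrite cN0.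
have hR : Rspan (fun v => exists p, M p /\ is_lf leB compN p v) (compN b n).
  exists [:: compN b n]; split.
    by case=> // _; exists n; split => //; split => //; exists b; split => //; split.
  by exists (fun _ => 1); rewrite big_ord1 /= scale1r.
have [s [hs [c hc]]] := (proj1 (HX (compN b n))) hR.
have hW : Wb b (compN b n).
  rewrite -(cN_idem b n) hc cN_sum.
  have [h0 hD _] := Wb_ksub b.
  apply: big_ind => // i _.
  have [j [hj hl]] := hs i (ltn_ord i).
  exact: lf_term hj hl.
have [_ _ hz _] := cm_facts b.
have := hz _ hW (proj2 (hcp b)).
by move/eqP; rewrite (negbTE hb).
Qed.

Lemma main_sec :
  (forall n : N, exists m c,
      [/\ M m, complement_part compR leB compN X cmpl c & n = m + c]) /\
  (forall n : N, M n -> complement_part compR leB compN X cmpl n -> n = 0).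
Proof.
split; last exact: uniq_part.
move=> n; case: (zero_or_bnd n) => [-> | [b [_ hb]]]; last exact: exist_bnd hb.
exists 0, 0; split => //.
- by case: HMs.
- move=> b; split; first exact: cN_idem.
  rewrite cN0; by case: (cm_facts b) => [[]].
- by rewrite addr0.
Qed.
End Graded.

Theorem mainTheorem5 (k : fieldType) (A : nmodType) (leA : rel A)
  (R : comAlgType k) (compR : A -> R -> R)
  (B : eqType) (leB : rel B) (act : A -> B -> B)
  (N : lmodType R) (compN : B -> N -> N)
  (M : N -> Prop) (X : seq N) (cmpl : B -> (N -> Prop) -> (N -> Prop)) :
  fg_monoid A -> cancellative_monoid A -> ordered_monoid leA ->
  noetherian_ring R -> graded_algebra compR ->
  ordered_action leA leB act ->
  noetherian_module N -> graded_module compR act compN ->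
  submodule M ->
  graded_complementation compN cmpl ->
  macaulay_basis leB compN M X ->
  (* N = M (+) {n : n_b in N_b (-) W_b(X) for all b}, as k-vector spaces *)
  (forall n : N, exists m c,
      [/\ M m, complement_part compR leB compN X cmpl c & n = m + c]) /\
  (forall n : N, M n -> complement_part compR leB compN X cmpl n -> n = 0).
Proof.
intros _ _ _ _ HA Hact _ HM HMs Hc Hmac.
eapply main_sec; eassumption.
Qed.
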